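(* Let $\omega=e^{i\theta}$ with $-\pi<\theta\le\pi$. (a) Put $\omega^{1/4}=e^{i\theta/4}$. If $0<|\omega^{1/4}-z|<c_1$ for some $z\in\mathbb{C}$ with $|z|=1$ and some $0<c_1<\sqrt2$, then $|\omega-z^4|>c_2|\omega^{1/4}-z|$, where $c_2=(2-c_1^2)\sqrt{4-c_1^2}$. (b) If $0<|\omega-z^4|<c_0$ for some $z\in\mathbb{C}$ with $|z|=1$ and some $0<c_0\le2$, then $0<|\omega^{1/4}-z|<c_3$ for some fourth root $\omega^{1/4}$ of $\omega$, where $c_3$ is the smallest positive real root of $x^8-8x^6+20x^4-16x^2+c_0^2$. *)

(* Defs.v *)
From mathcomp Require Import all_boot all_order all_algebra.
From mathcomp Require Import all_classical all_reals all_analysis.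
From mathcomp Require Export complex.
Set Implicit Arguments. Unset Strict Implicit. Unset Printing Implicit Defensive.
Import Order.TTheory GRing.Theory Num.Theory.
Local Open Scope ring_scope.
Local Open Scope complex_scope.

Definition cexpi (R : realType) (t : R) : R[i] := (cos t) +i* (sin t).

Definition p3p7 (R : realType) (c0 : R) : {poly R} :=
  'X^8 - 8%:P * 'X^6 + 20%:P * 'X^4 - 16%:P * 'X^2 + (c0 ^+ 2)%:P.

Definition smallest_pos_root (R : realType) (p : {poly R}) (c : R) : Prop :=
  0 < c /\ root p c /\ (forall x : R, 0 < x < c -> ~~ root p x).

(* Main.v *)
Require Import Defs.
From mathcomp Require Import all_boot all_order all_algebra.
From mathcomp Require Import all_classical all_reals all_analysis.
From mathcomp Require Import complex.
From mathcomp Require Import ring lra.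
Import Order.TTheory GRing.Theory Num.Theory.
Set Implicit Arguments. Unset Strict Implicit.
Local Open Scope ring_scope.
Local Open Scope complex_scope.

Section S.
Variable R : realType.

Lemma cexpiD (s t : R) : cexpi s * cexpi t = cexpi (s + t).
Proof. rewrite /cexpi; simpc. rewrite cosD sinD. congr (_ +i* _); ring. Qed.

Lemma cexpi4 (t : R) : cexpi (t / 4) ^+ 4 = cexpi t.
Proof.
rewrite !exprS expr0 mulr1 !cexpiD; congr cexpi.
have -> : (4 : R) = 4%:R by [].
by field.
Qed.

Definition nr (c : R[i]) : R := complex.Re `|c|.

Lemma nrE c : `|c| = (nr c)%:C.
Proof. by rewrite /nr normc_def. Qed.

Lemma nr_ge0 c : 0 <= nr c.
Proof. by rewrite /nr normc_def /= sqrtr_ge0. Qed.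

Lemma nr2 c : nr c ^+ 2 = complex.Re c ^+ 2 + complex.Im c ^+ 2.
Proof. rewrite /nr normc_def /= sqr_sqrtr //; by rewrite addr_ge0 // sqr_ge0. Qed.

Lemma nrM a b : nr (a * b) = nr a * nr b.
Proof. by apply: complexI; rewrite rmorphM -!nrE normrM. Qed.

Lemma nr_cexpi t : nr (cexpi t) = 1.
Proof. by rewrite /nr normc_def /= cos2Dsin2 sqrtr1. Qed.

Lemma test (x y : R) : complex.Re (1 - (x +i* y)) = 1 - x /\ complex.Im (1 - (x +i* y)) = - y.
Proof. simpc. split => //=. Qed.
Lemma key (t : R[i]) : nr t = 1 ->
  nr (1 - t) ^+ 2 = 2 - 2 * complex.Re t /\
  nr (1 - t ^+ 4) ^+ 2 = (2 - 2 * complex.Re t) * (2 + 2 * complex.Re t) * (4 * complex.Re t ^+ 2).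
Proof.
case: t => x y /= h1.
have h : x ^+ 2 + y ^+ 2 = 1 by rewrite -(nr2 (x +i* y)) h1 expr1n.
have -> : 1 - (x +i* y) ^+ 4 = (1 - (x +i* y)) * (1 + (x +i* y)) * (1 + (x +i* y) ^+ 2) by ring.
rewrite !nrM !exprMn !nr2 expr2; simpc => /=.
have hy : y ^+ 2 = 1 - x ^+ 2 by rewrite -h; ring.
split.
  transitivity ((1-x)*(1-x) + y^+2); first ring.
  rewrite hy; ring.
transitivity (((1-x)*(1-x) + y^+2) * ((1+x)^+2 + y^+2) * ((1 + (x*x - y^+2))^+2 + 4*x^+2*y^+2)); first ring.
rewrite hy; ring.
Qed.
Lemma realA (d e c1 S x : R) : 0 <= d -> 0 <= e -> d ^+ 2 = 2 - 2 * x ->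
  e ^+ 2 = (2 - 2 * x) * (2 + 2 * x) * (4 * x ^+ 2) ->
  0 < d -> d < c1 -> c1 ^+ 2 < 2 -> 0 <= S -> S ^+ 2 = 4 - c1 ^+ 2 ->
  (2 - c1 ^+ 2) * S * d < e.
Proof.
move=> d0 e0 hd he dp dc c2 S0 hS.
have hx : x = 1 - d ^+ 2 / 2 by rewrite hd; field.
have he' : e ^+ 2 = d ^+ 2 * (4 - d ^+ 2) * (2 - d ^+ 2) ^+ 2 by rewrite he hx; field.
have dd : d ^+ 2 < c1 ^+ 2 by nra.
have h1 : (2 - c1 ^+ 2) ^+ 2 < (2 - d ^+ 2) ^+ 2 by nra.
have h2 : 0 < 4 - c1 ^+ 2 by nra.
have h3 : (2 - c1 ^+ 2) ^+ 2 * (4 - c1 ^+ 2) < (2 - d ^+ 2) ^+ 2 * (4 - d ^+ 2).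
  apply: (lt_le_trans (y := (2 - d ^+ 2) ^+ 2 * (4 - c1 ^+ 2))).
    by rewrite ltr_pM2r.
  apply: ler_wpM2l; first exact: sqr_ge0.
  lra.
have h4 : ((2 - c1 ^+ 2) * S * d) ^+ 2 < e ^+ 2.
  rewrite he' !exprMn hS.
  have : 0 < d ^+ 2 by nra.
  nra.
have L0 : 0 <= (2 - c1 ^+ 2) * S * d.
  have h5 : 0 <= 2 - c1 ^+ 2 by lra.
  by apply: mulr_ge0 => //; apply: mulr_ge0.
nra.
Qed.

Lemma realB (d e c0 c3 x y : R) : 0 <= d -> 0 <= e -> d ^+ 2 = 2 - 2 * x ->
  e ^+ 2 = (2 - 2 * x) * (2 + 2 * x) * (4 * x ^+ 2) ->
  `|y| <= x -> x ^+ 2 + y ^+ 2 = 1 -> 0 < e -> e < c0 ->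
  c3 ^+ 8 - 8 * c3 ^+ 6 + 20 * c3 ^+ 4 - 16 * c3 ^+ 2 + c0 ^+ 2 = 0 ->
  0 < c3 -> 0 < d < c3.
Proof.
move=> d0 e0 hd he hxy hu ep ec hp c3p.
have x0 : 0 <= x by apply: le_trans hxy; exact: normr_ge0.
have ny : `|y| ^+ 2 = y ^+ 2 by rewrite real_normK // num_real.
have ny0 : 0 <= `|y| by exact: normr_ge0.
have y2 : y ^+ 2 <= x ^+ 2 by nra.
have x2 : 1 <= 2 * x ^+ 2 by lra.
apply/andP; split.
  rewrite lt_neqAle d0 andbT; apply/eqP => d00.
  have x1 : x = 1 by move: hd; rewrite -d00 expr0n /=; lra.
  move: he; rewrite x1. nra.
rewrite ltNge; apply/negP => cd.
set s := 1 - c3 ^+ 2 / 2.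
have cd2 : c3 ^+ 2 <= d ^+ 2 by nra.
have sx : x <= s by rewrite /s; lra.
have hps : c0 ^+ 2 = 16 * s ^+ 2 * (1 - s ^+ 2).
  rewrite /s. have -> : c0 ^+ 2 = - (c3 ^+ 8 - 8 * c3 ^+ 6 + 20 * c3 ^+ 4 - 16 * c3 ^+ 2) by lra.
  by field.
have mono : s ^+ 2 * (1 - s ^+ 2) <= x ^+ 2 * (1 - x ^+ 2).
  have : x ^+ 2 <= s ^+ 2 by nra.
  nra.
have : e ^+ 2 < c0 ^+ 2 by nra.
nra.
Qed.
Lemma nr0 : nr 0 = 0.
Proof. by rewrite /nr normr0. Qed.

Lemma nr1z (z : R[i]) : `|z| = 1 -> nr z = 1.
Proof. by move=> h; apply: complexI; rewrite -nrE h. Qed.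

Lemma nrN (a : R[i]) : nr (- a) = nr a.
Proof. by apply: complexI; rewrite -!nrE normrN. Qed.

Lemma nri : nr 'i = 1.
Proof. by rewrite /nr normc_def /= expr0n expr1n add0r sqrtr1. Qed.

Lemma neq0 (a : R[i]) : nr a = 1 -> a != 0.
Proof. by move=> ha; apply/eqP => a0; move: ha; rewrite a0 nr0 => /esym/eqP; rewrite oner_eq0. Qed.

Lemma reduce (a z : R[i]) : nr a = 1 -> nr z = 1 ->
  [/\ nr (z / a) = 1, nr (a - z) = nr (1 - z / a) & nr (a ^+ 4 - z ^+ 4) = nr (1 - (z / a) ^+ 4)].
Proof.
move=> ha hz; have a0 := neq0 ha.
split.
- have e : z = (z / a) * a by field.
  by move: hz; rewrite {1}e nrM ha mulr1.
- have -> : a - z = a * (1 - z / a) by field.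
  by rewrite nrM ha mul1r.
- have -> : a ^+ 4 - z ^+ 4 = a ^+ 4 * (1 - (z / a) ^+ 4) by by rewrite expr_div_n; field.
  have h4 : nr (a ^+ 4) = 1 by rewrite !exprS expr0 mulr1 !nrM ha !mul1r.
  by rewrite nrM h4 mul1r.
Qed.
Lemma ltc0 (k : R) : ((0 : R[i]) < k%:C) = (0 < k).
Proof. exact: ltcR. Qed.

Lemma finishB (w z : R[i]) (c0 c3 : R) : nr w = 1 -> nr z = 1 ->
  `|complex.Im (z / w)| <= complex.Re (z / w) -> 0 < c3 ->
  c3 ^+ 8 - 8 * c3 ^+ 6 + 20 * c3 ^+ 4 - 16 * c3 ^+ 2 + c0 ^+ 2 = 0 ->
  0 < `|w ^+ 4 - z ^+ 4| < c0%:C -> 0 < `|w - z| < c3%:C.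
Proof.
move=> hw hz hxy c3p hp; rewrite !nrE ltc0 ltcR => /andP[h0 h1].
have [ht e1 e2] := reduce hw hz.
have [k1 k2] := key ht.
have hu : complex.Re (z / w) ^+ 2 + complex.Im (z / w) ^+ 2 = 1 by rewrite -nr2 ht expr1n.
rewrite e2 in h0 h1.
rewrite ltc0 ltcR e1.
apply: (realB (nr_ge0 _) (nr_ge0 _) k1 k2 hxy hu h0 h1 hp c3p).
Qed.

Lemma quad (x y : R) : [\/ `|y| <= x, `|y| <= -x, `|x| <= y | `|x| <= -y].
Proof.
case: (lerP `|y| `|x|) => h; move: h.
  by case: (ger0P x) => s h; [apply: Or41 | apply: Or42].
by case: (ger0P y) => s h; [apply: Or43 | apply: Or44]; apply: ltW.
Qed.

Lemma iinv : ('i : R[i])^-1 = - 'i.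
Proof.
have i0 : ('i : R[i]) != 0 by apply/eqP => -[] /eqP; rewrite oner_eq0.
apply: (@mulrI _ 'i); first by rewrite unitfE.
by rewrite mulrV ?unitfE // mulrN -expr2 sqr_i opprK.
Qed.

Lemma i4 : ('i : R[i]) ^+ 4 = 1.
Proof. by rewrite (_ : 4 = 2 + 2)%N // exprD sqr_i mulrNN mulr1. Qed.
Lemma rootp (c0 c3 : R) : root (p3p7 c0) c3 ->
  c3 ^+ 8 - 8 * c3 ^+ 6 + 20 * c3 ^+ 4 - 16 * c3 ^+ 2 + c0 ^+ 2 = 0.
Proof. move/rootP; rewrite /p3p7 !(hornerD, hornerN, hornerM, hornerC, hornerXn, hornerX) => h; rewrite -[RHS]h; ring. Qed.
Lemma ReN (t : R[i]) : complex.Re (- t) = - complex.Re t.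
Proof. by case: t. Qed.
Lemma ImN (t : R[i]) : complex.Im (- t) = - complex.Im t.
Proof. by case: t. Qed.
End S.
Unset Implicit Arguments.

Theorem lemma3p7 (R : realType) (theta : R) (htheta : - pi < theta <= pi) :
  (forall (z : R[i]) (c1 : R),
      `|z| = 1 -> 0 < c1 < Num.sqrt 2 ->
      0 < `|cexpi (theta / 4) - z| < c1%:C ->
      ((2 - c1 ^+ 2) * Num.sqrt (4 - c1 ^+ 2))%:C * `|cexpi (theta / 4) - z|
        < `|cexpi theta - z ^+ 4|)
  /\
  (forall (z : R[i]) (c0 c3 : R),
      `|z| = 1 -> 0 < c0 <= 2 -> smallest_pos_root (p3p7 c0) c3 ->
      0 < `|cexpi theta - z ^+ 4| < c0%:C ->
      exists w : R[i], w ^+ 4 = cexpi theta /\ 0 < `|w - z| < c3%:C).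
Proof.
have ha : nr (cexpi (theta / 4)) = 1 := nr_cexpi _.
split.
- move=> z c1 hz /andP[c1p c1s]; rewrite !nrE ltc0 ltcR => /andP[h0 h1].
  have [ht e1 e2] := reduce ha (nr1z hz).
  rewrite -(cexpi4 theta) -rmorphM ltcR.
  rewrite e1 in h0 h1 *; rewrite e2.
  have [k1 k2] := key ht.
  have s2 : Num.sqrt 2 ^+ 2 = 2 :> R by rewrite sqr_sqrtr // ler0n.
  have s0 : 0 <= Num.sqrt 2 :> R by exact: sqrtr_ge0.
  have c12 : c1 ^+ 2 < 2 by nra.
  have S0 := sqrtr_ge0 (4 - c1 ^+ 2).
  have hS : Num.sqrt (4 - c1 ^+ 2) ^+ 2 = 4 - c1 ^+ 2 by rewrite sqr_sqrtr //; lra.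
  exact: (realA (nr_ge0 _) (nr_ge0 _) k1 k2 h0 h1 c12 S0 hS).
- move=> z c0 c3 hz _ [c3p [hr _]].
  rewrite -(cexpi4 theta) => hh.
  move: ha hh; set a := cexpi (theta / 4) => ha hh.
  have a0 := neq0 ha.
  have hz1 := nr1z hz.
  have hp := rootp hr.
  have zt : z = (z / a) * a by field.
  case: (quad (complex.Re (z / a)) (complex.Im (z / a))) => hq.
  + exists a; split => //.
    by move: (finishB ha hz1 hq c3p hp); apply.
  + have w4 : (- a) ^+ 4 = a ^+ 4 by ring.
    exists (- a); split; first by [].
    have hw : nr (- a) = 1 by rewrite nrN.
    have hq' : `|complex.Im (z / - a)| <= complex.Re (z / - a).
      have -> : z / - a = - (z / a) by field.
      by rewrite ReN ImN normrN.
    by move: (finishB hw hz1 hq' c3p hp); rewrite w4; apply.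
  + have w4 : (a * 'i) ^+ 4 = a ^+ 4 by rewrite exprMn i4 mulr1.
    exists (a * 'i); split; first by [].
    have hw : nr (a * 'i) = 1 by rewrite nrM nri ha mulr1.
    have hq' : `|complex.Im (z / (a * 'i))| <= complex.Re (z / (a * 'i)).
      have -> : z / (a * 'i) = - ((z / a) * 'i) by rewrite invfM iinv; field.
      by rewrite ReN ImN ReiNIm ImiRe opprK normrN.
    by move: (finishB hw hz1 hq' c3p hp); rewrite w4; apply.
  + have w4 : (- (a * 'i)) ^+ 4 = a ^+ 4.
      by rewrite (_ : (- (a * 'i)) ^+ 4 = (a * 'i) ^+ 4); [rewrite exprMn i4 mulr1 | ring].
    exists (- (a * 'i)); split; first by [].
    have hw : nr (- (a * 'i)) = 1 by rewrite nrN nrM nri ha mulr1.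
    have hq' : `|complex.Im (z / - (a * 'i))| <= complex.Re (z / - (a * 'i)).
      have -> : z / - (a * 'i) = (z / a) * 'i by rewrite invrN invfM iinv; field.
      by rewrite ReiNIm ImiRe.
    by move: (finishB hw hz1 hq' c3p hp); rewrite w4; apply.
Qed.
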